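(* Let $\varphi:\mathbb{R}^n\to\mathbb{R}$ be continuously differentiable around $\bar x$ with $\nabla\varphi(\bar x)=0$, where $\nabla\varphi$ is locally Lipschitzian around $\bar x$ with modulus $\ell>0$ and semismooth$^*$ at $\bar x$. Let $x^k\to\bar x$ with $x^k\neq\bar x$ for all $k$, and let $\{d^k\}$ satisfy $\|x^k+d^k-\bar x\|=o(\|x^k-\bar x\|)$. Consider: (i) $\nabla\varphi$ is directionally differentiable at $\bar x$ and there is $\kappa>0$ with $\langle\nabla\varphi(x^k),d^k\rangle\le-\frac1\kappa\|d^k\|^2$ for all sufficiently large $k$; (ii) there is $\kappa>0$ with $\varphi(x^k+d^k)-\varphi(x^k)\le\langle\nabla\varphi(x^k+d^k),d^k\rangle-\frac1{2\kappa}\|d^k\|^2$ for all sufficiently large $k$. Then $\varphi(x^k+d^k)\le\varphi(x^k)+\sigma\langle\nabla\varphi(x^k),d^k\rangle$ for all sufficiently large $k$, provided that either (i) holds and $\sigma\in(0,\tfrac12)$, or (ii) holds and $\sigma\in(0,1/(2\ell\kappa))$.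
   Context: Regular normal cone: $\widehat N_\Omega(\bar z):=\{v\mid \limsup_{z\to\bar z,\,z\in\Omega}\langle v,z-\bar z\rangle/\|z-\bar z\|\le 0\}$. Directional limiting normal cone: $N_\Omega(\bar z;d):=\{v\mid\exists t_k\downarrow0,\ d_k\to d,\ v_k\to v \text{ with } v_k\in\widehat N_\Omega(\bar z+t_kd_k)\}$. Directional coderivative of $F:\mathbb{R}^n\rightrightarrows\mathbb{R}^m$: $D^*F((\bar x,\bar y);(u,v))(v^* ):=\{u^*\mid(u^*,-v^* )\in N_{\operatorname{gph}F}((\bar x,\bar y);(u,v))\}$. $F$ is semismooth$^*$ at $(\bar x,\bar y)\in\operatorname{gph}F$ if for all $(u,v)\in\mathbb{R}^n\times\mathbb{R}^m$, $\langle u^*,u\rangle=\langle v^*,v\rangle$ whenever $u^*\in D^*F((\bar x,\bar y);(u,v))(v^* )$. ''$\nabla\varphi$ semismooth$^*$ at $\bar x$'' means at $(\bar x,\nabla\varphi(\bar x))$. *)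

(* Defs.v *)
(* R : realType, R^n rendered as row vectors 'rV[R]_n with the
   Euclidean inner product and norm defined below. *)
From HB Require Import structures.
From mathcomp Require Import all_boot all_order all_algebra.
From mathcomp Require Import reals.
Set Implicit Arguments. Unset Strict Implicit. Unset Printing Implicit Defensive.
Import Order.TTheory GRing.Theory Num.Theory.
Local Open Scope ring_scope.

Definition dotv {R : realType} {n : nat} (u v : 'rV[R]_n) : R :=
  \sum_(i < n) u 0 i * v 0 i.
Definition normv {R : realType} {n : nat} (u : 'rV[R]_n) : R :=
  Num.sqrt (dotv u u).

Definition pdot {R : realType} {n m : nat} (z w : 'rV[R]_n * 'rV[R]_m) : R :=
  dotv z.1 w.1 + dotv z.2 w.2.
Definition psub {R : realType} {n m : nat} (z w : 'rV[R]_n * 'rV[R]_m)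
  : 'rV[R]_n * 'rV[R]_m := (z.1 - w.1, z.2 - w.2).
Definition pnorm {R : realType} {n m : nat} (z : 'rV[R]_n * 'rV[R]_m) : R :=
  Num.sqrt (pdot z z).

(* Regular (Fréchet) normal cone: v ∈ N̂_Ω(z̄) iff z̄ ∈ Ω and
   limsup_{z -> z̄, z ∈ Ω} <v, z - z̄>/||z - z̄|| <= 0 (empty if z̄ ∉ Ω). *)
Definition regular_normal {R : realType} {n m : nat}
  (Om : 'rV[R]_n * 'rV[R]_m -> Prop) (zb v : 'rV[R]_n * 'rV[R]_m) : Prop :=
  Om zb /\
  forall eps : R, 0 < eps -> exists delta : R, 0 < delta /\
    forall z, Om z -> pnorm (psub z zb) < delta ->
      pdot v (psub z zb) <= eps * pnorm (psub z zb).

Definition rseq_cvg0 {R : realType} (t : nat -> R) : Prop :=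
  forall eps : R, 0 < eps -> exists N, forall k, (N <= k)%N -> `|t k| < eps.
Definition pseq_cvg {R : realType} {n m : nat}
  (s : nat -> 'rV[R]_n * 'rV[R]_m) (l : 'rV[R]_n * 'rV[R]_m) : Prop :=
  forall eps : R, 0 < eps -> exists N, forall k, (N <= k)%N ->
    pnorm (psub (s k) l) < eps.
Definition vseq_cvg {R : realType} {n : nat} (s : nat -> 'rV[R]_n) (l : 'rV[R]_n)
  : Prop :=
  forall eps : R, 0 < eps -> exists N, forall k, (N <= k)%N -> normv (s k - l) < eps.

Definition dir_normal {R : realType} {n m : nat}
  (Om : 'rV[R]_n * 'rV[R]_m -> Prop) (zb d v : 'rV[R]_n * 'rV[R]_m) : Prop :=
  exists (t : nat -> R) (dk vk : nat -> 'rV[R]_n * 'rV[R]_m),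
    (forall k, 0 < t k) /\ rseq_cvg0 t /\ pseq_cvg dk d /\ pseq_cvg vk v /\
    forall k, regular_normal Om (zb.1 + t k *: (dk k).1, zb.2 + t k *: (dk k).2)
                             (vk k).

Definition graph {R : realType} {n m : nat} (F : 'rV[R]_n -> 'rV[R]_m)
  : 'rV[R]_n * 'rV[R]_m -> Prop := fun z => z.2 = F z.1.

Definition dir_coderiv {R : realType} {n m : nat} (F : 'rV[R]_n -> 'rV[R]_m)
  (xb : 'rV[R]_n) (yb : 'rV[R]_m) (u : 'rV[R]_n) (v : 'rV[R]_m)
  (vstar : 'rV[R]_m) (ustar : 'rV[R]_n) : Prop :=
  dir_normal (graph F) (xb, yb) (u, v) (ustar, - vstar).

Definition semismooth_star {R : realType} {n m : nat} (F : 'rV[R]_n -> 'rV[R]_m)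
  (xb : 'rV[R]_n) (yb : 'rV[R]_m) : Prop :=
  graph F (xb, yb) /\
  forall (u : 'rV[R]_n) (v : 'rV[R]_m) (ustar : 'rV[R]_n) (vstar : 'rV[R]_m),
    dir_coderiv F xb yb u v vstar ustar -> dotv ustar u = dotv vstar v.

Definition has_gradient {R : realType} {n : nat} (phi : 'rV[R]_n -> R)
  (x g : 'rV[R]_n) : Prop :=
  forall eps : R, 0 < eps -> exists delta : R, 0 < delta /\
    forall y, normv (y - x) < delta ->
      `|phi y - phi x - dotv g (y - x)| <= eps * normv (y - x).

Definition continuous_at_v {R : realType} {n m : nat} (G : 'rV[R]_n -> 'rV[R]_m)
  (x : 'rV[R]_n) : Prop :=
  forall eps : R, 0 < eps -> exists delta : R, 0 < delta /\
    forall y, normv (y - x) < delta -> normv (G y - G x) < eps.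

Definition C1_around {R : realType} {n : nat} (phi : 'rV[R]_n -> R)
  (G : 'rV[R]_n -> 'rV[R]_n) (xb : 'rV[R]_n) : Prop :=
  exists r : R, 0 < r /\ forall x, normv (x - xb) < r ->
    has_gradient phi x (G x) /\ continuous_at_v G x.

Definition loc_lipschitz {R : realType} {n m : nat} (G : 'rV[R]_n -> 'rV[R]_m)
  (xb : 'rV[R]_n) (l : R) : Prop :=
  exists r : R, 0 < r /\ forall x y, normv (x - xb) < r -> normv (y - xb) < r ->
    normv (G x - G y) <= l * normv (x - y).

Definition dir_differentiable {R : realType} {n m : nat}
  (G : 'rV[R]_n -> 'rV[R]_m) (xb : 'rV[R]_n) : Prop :=
  forall h : 'rV[R]_n, exists w : 'rV[R]_m, forall eps : R, 0 < eps ->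
    exists delta : R, 0 < delta /\ forall t : R, 0 < t -> t < delta ->
      normv (t^-1 *: (G (xb + t *: h) - G xb) - w) <= eps.

Definition eventually_nat (P : nat -> Prop) : Prop :=
  exists N, forall k, (N <= k)%N -> P k.

(* Main.v *)
Require Import Defs.
From HB Require Import structures.
From mathcomp Require Import all_boot all_order all_algebra.
From mathcomp Require Import reals.
From mathcomp Require Import all_classical all_reals all_analysis.
From mathcomp Require Import ring lra.
Set Implicit Arguments. Unset Strict Implicit. Unset Printing Implicit Defensive.
Import Order.TTheory GRing.Theory Num.Theory.
Import numFieldNormedType.Exports.
Local Open Scope classical_set_scope.
Local Open Scope ring_scope.
Section Vec.
Variables (R : realType) (n : nat).
Implicit Types (u v w : 'rV[R]_n) (c : R).

Lemma dotvC u v : dotv u v = dotv v u.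
Proof. by apply: eq_bigr => i _; rewrite mulrC. Qed.
Lemma dotvDr u v w : dotv u (v + w) = dotv u v + dotv u w.
Proof. by rewrite /dotv -big_split; apply: eq_bigr => i _; rewrite mxE mulrDr. Qed.
Lemma dotvZr u c v : dotv u (c *: v) = c * dotv u v.
Proof. by rewrite /dotv mulr_sumr; apply: eq_bigr => i _; rewrite mxE mulrCA. Qed.
Lemma dotvNr u v : dotv u (- v) = - dotv u v.
Proof. by rewrite -scaleN1r dotvZr mulN1r. Qed.
Lemma dotvBr u v w : dotv u (v - w) = dotv u v - dotv u w.
Proof. by rewrite dotvDr dotvNr. Qed.
Lemma dotvDl u v w : dotv (v + w) u = dotv v u + dotv w u.
Proof. by rewrite dotvC dotvDr !(dotvC u). Qed.
Lemma dotvZl u c v : dotv (c *: v) u = c * dotv v u.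
Proof. by rewrite dotvC dotvZr dotvC. Qed.
Lemma dotvNl u v : dotv (- v) u = - dotv v u.
Proof. by rewrite dotvC dotvNr dotvC. Qed.
Lemma dotvBl u v w : dotv (v - w) u = dotv v u - dotv w u.
Proof. by rewrite dotvDl dotvNl. Qed.
Lemma dotv0r u : dotv u 0 = 0.
Proof. by rewrite -(scale0r 0) dotvZr mul0r. Qed.
Lemma dotv0l u : dotv 0 u = 0.
Proof. by rewrite dotvC dotv0r. Qed.
Lemma dotvv_ge0 v : 0 <= dotv v v.
Proof. by apply: sumr_ge0 => i _; rewrite -expr2 sqr_ge0. Qed.
Lemma dotvv_eq0 v : dotv v v = 0 -> v = 0.
Proof.
move=> /eqP; rewrite psumr_eq0 => [/allP H|i _]; last by rewrite -expr2 sqr_ge0.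
apply/rowP => i; rewrite mxE.
have := H i (mem_index_enum i); rewrite /= mulf_eq0 orbb => /eqP ->; by [].
Qed.
Lemma normv_ge0 v : 0 <= normv v.
Proof. exact: sqrtr_ge0. Qed.
Lemma normv_sq v : normv v ^+ 2 = dotv v v.
Proof. by rewrite sqr_sqrtr // dotvv_ge0. Qed.
Lemma normvZ c v : normv (c *: v) = `|c| * normv v.
Proof. by rewrite /normv dotvZl dotvZr mulrA -expr2 sqrtrM ?sqr_ge0 // sqrtr_sqr. Qed.
Lemma normvN v : normv (- v) = normv v.
Proof. by rewrite -scaleN1r normvZ normrN1 mul1r. Qed.
Lemma normv0 : normv (0 : 'rV[R]_n) = 0.
Proof. by rewrite /normv dotv0r sqrtr0. Qed.
Lemma normv_eq0 v : normv v = 0 -> v = 0.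
Proof. by move=> h; apply: dotvv_eq0; rewrite -normv_sq h expr0n. Qed.

Lemma cs_sq u v : dotv u v ^+ 2 <= dotv u u * dotv v v.
Proof.
have [b0|bn0] := eqVneq (dotv v v) 0.
  by rewrite (dotvv_eq0 b0) dotv0r dotv0l expr0n /= mulr0.
have bp : 0 < dotv v v by rewrite lt_neqAle eq_sym bn0 dotvv_ge0.
have := dotvv_ge0 (dotv v v *: u - dotv u v *: v).
rewrite !(dotvBl, dotvBr, dotvZl, dotvZr) (dotvC v u).
move=> h.
have : 0 <= dotv v v * (dotv u u * dotv v v - dotv u v ^+ 2) by
  move: h; congr (_ <= _); ring.
by rewrite pmulr_rge0 // subr_ge0.
Qed.

Lemma cs u v : `|dotv u v| <= normv u * normv v.
Proof.
rewrite -ler_sqr ?nnegrE ?mulr_ge0 ?normv_ge0 //.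
by rewrite real_normK ?num_real // exprMn !normv_sq cs_sq.
Qed.
Lemma cs' u v : dotv u v <= normv u * normv v.
Proof. exact: le_trans (ler_norm _) (cs u v). Qed.

Lemma normvD u v : normv (u + v) <= normv u + normv v.
Proof.
rewrite -ler_sqr ?nnegrE ?addr_ge0 ?normv_ge0 //.
rewrite normv_sq !(dotvDl, dotvDr) sqrrD !normv_sq (dotvC v u).
have := cs' u v; lra.
Qed.
Lemma normvB u v : normv (u - v) <= normv u + normv v.
Proof. by rewrite -(normvN v) normvD. Qed.
Lemma normv_lb u v : normv u - normv v <= normv (u + v).
Proof.
have := normvB (u + v) v; rewrite addrK; lra.
Qed.

Lemma coord_le v i : `|v 0 i| <= normv v.
Proof.
rewrite -sqrtr_sqr /normv ler_sqrt // ?dotvv_ge0 // /dotv (bigD1 i) //= -expr2.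
by rewrite lerDl sumr_ge0 // => j _; rewrite -expr2 sqr_ge0.
Qed.

Lemma normv_coord v eta : 0 < eta -> (forall i, `|v 0 i| < eta / (n%:R + 1)) ->
  normv v < eta.
Proof.
move=> e0 H; rewrite -ltr_sqr ?nnegrE ?normv_ge0 ?ltW // normv_sq.
apply: (@le_lt_trans _ _ (\sum_(i < n) (eta / (n%:R + 1)) ^+ 2)).
  apply: ler_sum => i _; rewrite -expr2 -real_normK ?num_real //.
  by rewrite ler_sqr ?nnegrE ?normr_ge0 ?ltW ?(le_lt_trans (normr_ge0 _) (H i)) // ltW.
rewrite sumr_const card_ord.
have np : 0 < n%:R + 1 :> R by rewrite ltr_wpDl.
set c := eta / (n%:R + 1).
have cp : 0 < c by rewrite divr_gt0.
have -> : eta = c * (n%:R + 1) by rewrite /c divfK ?gt_eqF.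
rewrite -mulr_natr.
have : 0 <= n%:R :> R by [].
nra.
Qed.
Lemma normv_coordB v w eta : 0 < eta ->
  (forall i, `|v 0 i - w 0 i| < eta / (n%:R + 1)) -> normv (v - w) < eta.
Proof. by move=> e0 H; apply: normv_coord => // i; rewrite !mxE; exact: H. Qed.
End Vec.
Lemma cluster_rV (R: realType) n (u : nat -> 'rV[R]_n) (P : nat -> Prop):
 (forall k i, `|u k 0 i| <= 1) -> (forall N, exists k, (N <= k)%N /\ P k) ->
 exists h : 'rV[R]_n, forall eta, 0 < eta -> forall N, exists k,
   (N<=k)%N /\ P k /\ forall i, `|u k 0 i - h 0 i| < eta.
Proof.
move=> ub inf.
have [f hf] := @choice _ _ (fun j k => (j <= k)%N /\ P k) inf.
pose w j := u (f j).
have cA := @rV_compact R n (fun _ => `[-1, 1]%classic) (fun _ => @segment_compact R _ _).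
have FA : (w @ \oo) [set v : 'rV[R]_n | forall i, `[-1, 1]%classic (v ord0 i)].
  by exists 0%N => // j _ i; rewrite /= in_itv /= -ler_norml; exact: ub.
have [h [_ ch]] := cA _ _ FA.
exists h => eta eta0 N.
have [v [[j /= jN <-] hv]] := ch (w @` [set j | (N <= j)%N]) (ball h eta)
   ltac:(by exists N => // j hj; exists j)
   (nbhsx_ballx _ _ eta0).
exists (f j); split; first exact: leq_trans jN (hf j).1.
split; first exact: (hf j).2.
move=> i; move: hv => [_ /(_ ord0 i)]; rewrite /ball /= => hb.
by rewrite distrC; exact: hb.
Qed.
Lemma deriv_cvg_aux (R: realType) (psi D : R -> R) t:
 (forall eps, 0<eps -> exists delta, 0<delta /\
    forall s, `|s - t| < delta -> `|psi s - psi t - D t * (s - t)| <= eps * `|s - t|) ->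
   (fun h : R => h^-1 *: ((psi \o shift t) (h *: 1) - psi t)) @ 0^' --> D t.
Proof.
  move=> hd; apply/cvgrPdist_le => e e0.
  have [del [d0 H]] := hd e e0.
  near=> h.
  have hn0 : h != 0 by near: h; exact: nbhs_dnbhs_neq.
  have hlt : `|h| < del by near: h; exact: dnbhs0_lt.
  have := H (h + t); rewrite addrK => /(_ hlt).
  rewrite /= /shift /= [h%:A]mulr1 => Hh.
  have -> : D t - h^-1 *: (psi (h + t) - psi t) = h^-1 * - (psi (h + t) - psi t - D t * h).
    by rewrite /GRing.scale /=; field.
  rewrite normrM normrN normrV ?unitfE // ler_pdivrMl ?normr_gt0 // [`|h| * e]mulrC.
Unshelve. all: by end_near. Qed.

Lemma deriv_ge (R: realType) (psi D : R -> R):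
 (forall t, 0 <= t <= 1 -> forall eps, 0<eps -> exists delta, 0<delta /\
    forall s, `|s - t| < delta -> `|psi s - psi t - D t * (s - t)| <= eps * `|s - t|) ->
 (forall t, 0<=t<=1 -> 0 <= D t) -> psi 0 <= psi 1.
Proof.
move=> hd hD.
have dv t : 0 <= t <= 1 ->
   (fun h : R => h^-1 *: ((psi \o shift t) (h *: 1) - psi t)) @ 0^' --> D t.
  by move=> ht; apply: deriv_cvg_aux; apply: hd.
have itv (u : R) : u \in `[0, 1]%R -> 0 <= u <= 1 by rewrite in_itv.
have itvo (u : R) : u \in `]0, 1[%R -> 0 <= u <= 1.
  by rewrite in_itv /= => /andP[a b]; rewrite !ltW.
have der u : 0 <= u <= 1 -> derivable psi u 1 by move=> /dv/cvgP.
have dval u : 0 <= u <= 1 -> derive1 psi u = D u.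
  by move=> hu; rewrite derive1E; apply: cvg_lim => //; exact: dv.
apply: (@ger0_derive1_ndecr _ psi 0 1) => //.
- by move=> x /itvo/der.
- by move=> x /itvo hx; rewrite dval // hD.
- by apply: derivable_within_continuous => x /itv/der.
Qed.

Definition hasder1 (R : realType) (psi : R -> R) (t d : R) :=
  forall eps, 0<eps -> exists delta, 0<delta /\
    forall s, `|s - t| < delta -> `|psi s - psi t - d * (s - t)| <= eps * `|s - t|.

Lemma quad_ge (R : realType) (psi D : R -> R) (al be : R) :
  (forall t, 0 <= t <= 1 -> hasder1 psi t (D t)) ->
  (forall t, 0 <= t <= 1 -> al * t + be <= D t) ->
  psi 0 + al / 2 + be <= psi 1.
Proof.
move=> hd hD.
pose chi s := psi s - (al / 2 * s ^+ 2 + be * s).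
pose Dc t := D t - al * t - be.
suff : chi 0 <= chi 1.
  by rewrite /chi expr0n /= expr1n !mulr0 !mulr1 addr0 subr0; lra.
apply: (@deriv_ge R chi Dc); last first.
  by move=> t /hD; rewrite /Dc; lra.
move=> t ht e e0.
have e20 : 0 < e / 2 by rewrite divr_gt0.
have [d1 [d10 H]] := hd t ht _ e20.
have ap : 0 < 2 * (`|al| + 1) by rewrite mulr_gt0 // ltr_wpDl.
exists (Num.min d1 (e / (2 * (`|al| + 1)))); split.
  by rewrite lt_min d10 divr_gt0.
move=> s; rewrite lt_min => /andP[s1 s2].
have -> : chi s - chi t - Dc t * (s - t) =
   (psi s - psi t - D t * (s - t)) - al / 2 * (s - t) ^+ 2.
  by rewrite /chi /Dc /=; field.
have h3 : `|(psi s - psi t - D t * (s - t)) - al / 2 * (s - t) ^+ 2| <=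
   `|psi s - psi t - D t * (s - t)| + `|al / 2 * (s - t) ^+ 2| by apply: ler_normB.
have h1 := H s s1.
have h2 : `|al / 2 * (s - t) ^+ 2| <= e / 2 * `|s - t|.
  rewrite normrM.
  have -> : `|al / 2| = `|al| / 2 by rewrite normrM normfV [`|2|]ger0_norm.
  rewrite normrX.
  have q : `|s - t| * (2 * (`|al| + 1)) <= e by rewrite -ler_pdivlMr // ltW.
  have n1 := normr_ge0 (s - t).
  have n2 := normr_ge0 al.
  nra.
have eq : e * `|s - t| = e / 2 * `|s - t| + e / 2 * `|s - t| by field.
lra.
Qed.

Lemma quad_le (R : realType) (psi D : R -> R) (al be : R) :
  (forall t, 0 <= t <= 1 -> hasder1 psi t (D t)) ->
  (forall t, 0 <= t <= 1 -> D t <= al * t + be) ->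
  psi 1 <= psi 0 + al / 2 + be.
Proof.
move=> hd hD.
have := @quad_ge R (fun s => - psi s) (fun s => - D s) (- al) (- be).
have H1 : forall t, 0 <= t <= 1 -> hasder1 (fun s => - psi s) t (- D t).
  move=> t ht e e0; have [d [d0 H]] := hd t ht e e0; exists d; split => // s hs.
  by rewrite -normrN; have := H s hs; congr (`|_| <= _); ring.
have H2 : forall t, 0 <= t <= 1 -> - al * t + - be <= - D t.
  by move=> t /hD; lra.
move=> /(_ H1 H2); lra.
Qed.

Lemma grad_line (R : realType) n (phi : 'rV[R]_n -> R) G y v t :
  has_gradient phi (y + t *: v) (G (y + t *: v)) ->
  hasder1 (fun s => phi (y + s *: v)) t (dotv (G (y + t *: v)) v).
Proof.
move=> hg e e0.
have p : 0 < normv v + 1 by rewrite ltr_wpDl ?normv_ge0.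
have [d [d0 H]] := hg (e / (normv v + 1)) (divr_gt0 e0 p).
exists (d / (normv v + 1)); split; first by rewrite divr_gt0.
move=> s hs.
have eqv : (y + s *: v) - (y + t *: v) = (s - t) *: v.
  by rewrite scalerBl opprD addrACA subrr add0r.
have nv := normv_ge0 v.
have ns := normr_ge0 (s - t).
have hn : normv ((y + s *: v) - (y + t *: v)) < d.
  rewrite eqv normvZ; move: hs; rewrite ltr_pdivlMr // => hs.
  apply: le_lt_trans hs; rewrite ler_wpM2l //; lra.
have := H _ hn; rewrite eqv dotvZr normvZ [_ * (s - t)]mulrC => h.
apply: (le_trans h).
set c := e / (normv v + 1).
have c0 : 0 <= c by rewrite /c divr_ge0 // ltW.
have -> : e = c * (normv v + 1) by rewrite /c divfK // gt_eqF.
nra.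
Qed.

Lemma addsubK (R : realType) n (xb v : 'rV[R]_n) : xb + v - xb = v.
Proof. by rewrite addrC addKr. Qed.

Lemma phi_line_ge (R : realType) n (phi : 'rV[R]_n -> R) G y v al be :
  (forall t, 0 <= t <= 1 -> has_gradient phi (y + t *: v) (G (y + t *: v))) ->
  (forall t, 0 <= t <= 1 -> al * t + be <= dotv (G (y + t *: v)) v) ->
  phi y + al / 2 + be <= phi (y + v).
Proof.
move=> hg hb.
have := @quad_ge R (fun s => phi (y + s *: v)) (fun t => dotv (G (y + t *: v)) v) al be.
rewrite scale0r addr0 scale1r; apply => t ht; [exact: grad_line (hg t ht)|exact: hb].
Qed.

Lemma phi_line_le (R : realType) n (phi : 'rV[R]_n -> R) G y v al be :
  (forall t, 0 <= t <= 1 -> has_gradient phi (y + t *: v) (G (y + t *: v))) ->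
  (forall t, 0 <= t <= 1 -> dotv (G (y + t *: v)) v <= al * t + be) ->
  phi (y + v) <= phi y + al / 2 + be.
Proof.
move=> hg hb.
have := @quad_le R (fun s => phi (y + s *: v)) (fun t => dotv (G (y + t *: v)) v) al be.
rewrite scale0r addr0 scale1r; apply => t ht; [exact: grad_line (hg t ht)|exact: hb].
Qed.

Lemma dir_bound (R : realType) n (G : 'rV[R]_n -> 'rV[R]_n) xb h w l rL eps delta eta e t :
  G xb = 0 -> 0 <= l ->
  (forall x y, normv (x - xb) < rL -> normv (y - xb) < rL ->
     normv (G x - G y) <= l * normv (x - y)) ->
  (forall s, 0 < s -> s < delta -> normv (s^-1 *: (G (xb + s *: h) - G xb) - w) <= eps) ->
  0 < normv e -> normv e < delta -> normv h <= 2 -> 2 * normv e < rL ->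
  normv ((normv e)^-1 *: e - h) < eta -> 0 < t <= 1 ->
  normv (G (xb + t *: e) - (t * normv e) *: w) <= t * normv e * (l * eta + eps).
Proof.
move=> G0 l0 HL hd a0 ad h2 ar ue /andP[t0 t1].
set a := normv e in a0 ad ar ue *.
set s := t * a.
have s0 : 0 < s by rewrite mulr_gt0.
have sa : s <= a by rewrite /s ler_piMl // ltW.
have H1 : normv (G (xb + s *: h) - s *: w) <= s * eps.
  have := hd s s0 (le_lt_trans sa ad).
  rewrite G0 subr0 -(ler_pM2l s0).
  have -> : G (xb + s *: h) - s *: w = s *: (s^-1 *: G (xb + s *: h) - w).
    by rewrite scalerBr scalerA mulfV ?gt_eqF // scale1r.
  by rewrite normvZ ger0_norm // ltW.
have eq1 : (xb + t *: e) - (xb + s *: h) = s *: (a^-1 *: e - h).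
  rewrite opprD addrACA subrr add0r scalerBr scalerA /s -mulrA mulfV ?gt_eqF //.
  by rewrite mulr1.
have na : normv (xb + t *: e - xb) < rL.
  rewrite addsubK normvZ ger0_norm ?ltW //.
  have : t * a <= a by rewrite ler_piMl // ltW.
  rewrite -/a; lra.
have nb : normv (xb + s *: h - xb) < rL.
  rewrite addsubK normvZ ger0_norm ?ltW //.
  have := normv_ge0 h; nra.
have H2 := HL _ _ na nb.
rewrite eq1 normvZ (ger0_norm (ltW s0)) in H2.
have H3 : normv (G (xb + t *: e) - s *: w) <= normv (G (xb + t *: e) - G (xb + s *: h))
   + normv (G (xb + s *: h) - s *: w).
  by apply: (le_trans _ (normvD _ _)); rewrite addrA subrK.
have := normv_ge0 (a^-1 *: e - h).
have : l * (s * normv (a^-1 *: e - h)) <= l * (s * eta) by rewrite ler_wpM2l // ler_wpM2l ?ltW.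
rewrite mulrCA in H2; rewrite mulrCA => h4; rewrite mulrDr; lra.
Qed.

Lemma lip0 (R : realType) n (G : 'rV[R]_n -> 'rV[R]_n) xb l rL y :
  G xb = 0 -> 0 < rL ->
  (forall x y, normv (x - xb) < rL -> normv (y - xb) < rL ->
     normv (G x - G y) <= l * normv (x - y)) ->
  normv (y - xb) < rL -> normv (G y) <= l * normv (y - xb).
Proof.
move=> G0 r0 HL hy; have := HL y xb hy; rewrite subrr normv0 G0 subr0; exact.
Qed.

Lemma case_ii (R : realType) n (phi : 'rV[R]_n -> R) (G : 'rV[R]_n -> 'rV[R]_n)
  xb l rL (x d : nat -> 'rV[R]_n) sigma kappa :
  G xb = 0 -> 0 < l -> 0 < rL ->
  (forall x y, normv (x - xb) < rL -> normv (y - xb) < rL ->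
     normv (G x - G y) <= l * normv (x - y)) ->
  vseq_cvg x xb ->
  (forall eps : R, 0 < eps -> eventually_nat (fun k =>
     normv (x k + d k - xb) <= eps * normv (x k - xb))) ->
  0 < kappa ->
  eventually_nat (fun k =>
        phi (x k + d k) - phi (x k)
          <= dotv (G (x k + d k)) (d k) - (2 * kappa)^-1 * normv (d k) ^+ 2) ->
  0 < sigma -> sigma < (2 * l * kappa)^-1 ->
  eventually_nat (fun k =>
    phi (x k + d k) <= phi (x k) + sigma * dotv (G (x k)) (d k)).
Proof.
move=> G0 l0 r0 HL xcv qo k0 [N1 HN1] s0 sl.
set c := (2 * kappa)^-1.
have c0 : 0 < c by rewrite invr_gt0 mulr_gt0.
have slc : sigma * l < c.
  have -> : c = (2 * l * kappa)^-1 * l by rewrite /c; field; rewrite ?gt_eqF.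
  by rewrite ltr_pM2r.
set ga := c - sigma * l.
have ga0 : 0 < ga by rewrite subr_gt0.
have lc0 : 0 < l + c by rewrite addr_gt0.
set eps := Num.min (ga / (l + c)) 1.
have eps0 : 0 < eps by rewrite lt_min ltr01 andbT divr_gt0.
have eps1 : eps <= 1 by rewrite ge_min lexx orbT.
have epsg : (l + c) * eps <= ga.
  by rewrite -ler_pdivlMl // ge_min [_^-1 * _]mulrC lexx.
have [N2 HN2] := qo eps eps0.
have [N3 HN3] := xcv rL r0.
exists (N1 + N2 + N3)%N => k hk.
have k1 : (N1 <= k)%N by apply: leq_trans hk; rewrite -addnA leq_addr.
have k2 : (N2 <= k)%N by apply: leq_trans hk; rewrite addnAC leq_addl.
have k3 : (N3 <= k)%N by apply: leq_trans hk; rewrite leq_addl.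
have h1 := HN1 k k1.
have h2 := HN2 k k2.
have h3 := HN3 k k3.
set e := x k - xb in h2 h3.
set q := x k + d k - xb in h2.
have eqd : q - d k = e by rewrite /q /e addrAC addrK.
set A := normv e in h2 h3.
set Q := normv q in h2.
set D := normv (d k).
have A0 : 0 <= A := normv_ge0 _.
have Q0 : 0 <= Q := normv_ge0 _.
have D0 : 0 <= D := normv_ge0 _.
have AQD : A <= Q + D by rewrite /A -eqd /Q /D normvB.
have QA : Q <= A.
  apply: le_trans h2 _; rewrite ler_piMl //.
have hGx : normv (G (x k)) <= l * A by apply: lip0 G0 r0 HL h3.
have hGy : normv (G (x k + d k)) <= l * Q.
  by apply: lip0 G0 r0 HL _; rewrite -/q; apply: le_lt_trans h3.
have g1 : dotv (G (x k + d k)) (d k) <= l * Q * D.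
  have hc := cs' (G (x k + d k)) (d k).
  have hm : normv (G (x k + d k)) * D <= l * Q * D by rewrite ler_wpM2r.
  move: hc; rewrite -/D; lra.
have g2 : - (l * A * D) <= dotv (G (x k)) (d k).
  have hc := cs (G (x k)) (d k).
  have hm : normv (G (x k)) * D <= l * A * D by rewrite ler_wpM2r.
  move: hc; rewrite -/D ler_norml => /andP[hc _]; lra.
have sg2 : sigma * (- (l * A * D)) <= sigma * dotv (G (x k)) (d k).
  by rewrite ler_wpM2l // ltW.
have B1 : (l + c) * Q <= (l + c) * (eps * A) by rewrite ler_wpM2l // ltW.
have B2 : (l + c) * eps * A <= ga * A by rewrite ler_wpM2r.
have B : l * Q + sigma * l * A - c * D <= 0.
  have : c * (A - Q) <= c * D.
    by apply: ler_wpM2l; [exact: ltW | lra].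
  rewrite /ga in B2; nra.
have fin : D * (l * Q + sigma * l * A - c * D) <= 0 by nra.
rewrite -/c in h1.
rewrite -/D in h1. lra.
Qed.

Lemma final_arith (R : realType) (P1 Pb P0 ge gq g Q a ga l s : R) :
  P1 <= Pb + 0 / 2 + l * Q ^+ 2 ->
  Pb + (ge - 2 * (ga / 4) * a ^+ 2) / 2 + 0 <= P0 ->
  - (l * a * Q) <= gq -> g = gq - ge ->
  l * Q ^+ 2 <= ga / 4 * a ^+ 2 / 2 ->
  l * a * Q <= ga / 4 * a ^+ 2 ->
  (2^-1 - s) * g <= - (ga * a ^+ 2) -> 0 <= ga * a ^+ 2 ->
  P1 <= P0 + s * g.
Proof. lra. Qed.

Lemma case_i (R : realType) n (phi : 'rV[R]_n -> R) (G : 'rV[R]_n -> 'rV[R]_n)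
  xb l rC rL (x d : nat -> 'rV[R]_n) sigma kappa :
  G xb = 0 -> 0 < l -> 0 < rC ->
  (forall y, normv (y - xb) < rC -> has_gradient phi y (G y)) ->
  0 < rL ->
  (forall x y, normv (x - xb) < rL -> normv (y - xb) < rL ->
     normv (G x - G y) <= l * normv (x - y)) ->
  vseq_cvg x xb -> (forall k, x k != xb) ->
  (forall eps : R, 0 < eps -> eventually_nat (fun k =>
     normv (x k + d k - xb) <= eps * normv (x k - xb))) ->
  dir_differentiable G xb -> 0 < kappa ->
  eventually_nat (fun k => dotv (G (x k)) (d k) <= - kappa^-1 * normv (d k) ^+ 2) ->
  0 < sigma -> sigma < 2^-1 ->
  eventually_nat (fun k =>
    phi (x k + d k) <= phi (x k) + sigma * dotv (G (x k)) (d k)).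
Proof.
move=> G0 l0 rC0 HC rL0 HL xcv xne qo dd k0 [N1 HN1] s0 s2.
case: (pselect (eventually_nat (fun k =>
    phi (x k + d k) <= phi (x k) + sigma * dotv (G (x k)) (d k)))) => // Hn.
exfalso.
have inf : forall N, exists k, (N <= k)%N /\
    ~ (phi (x k + d k) <= phi (x k) + sigma * dotv (G (x k)) (d k)).
  move=> N; apply: contrapT => hN; apply: Hn; exists N => k hk.
  by apply: contrapT => hk'; apply: hN; exists k.
have ane k : normv (x k - xb) != 0.
  apply/eqP => /normv_eq0 /eqP; rewrite subr_eq0; exact/negP/xne.
pose u k := (normv (x k - xb))^-1 *: (x k - xb).
have un k : normv (u k) = 1.
  by rewrite /u normvZ ger0_norm ?invr_ge0 ?normv_ge0 // mulVf.
have ub k i : `|u k 0 i| <= 1 by rewrite -(un k) coord_le.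
have [h hh] := cluster_rV ub inf.
have np : 0 < n%:R + 1 :> R by rewrite ltr_wpDl.
have hn2 : normv h <= 2.
  have [k [_ [_ hc]]] := hh (1 / (n%:R + 1)) (divr_gt0 ltr01 np) 0%N.
  have := normv_coordB ltr01 hc.
  have := normvB (u k) (u k - h); rewrite opprB addrC subrK un; lra.
set ga := (2^-1 - sigma) / (4 * kappa).
have ga0 : 0 < ga by rewrite divr_gt0 ?subr_gt0 // mulr_gt0.
set e1 := Num.min 2^-1 (ga / (4 * l)).
have e10 : 0 < e1 by rewrite lt_min invr_gt0 ltr0n /= divr_gt0 // mulr_gt0.
have e1h : e1 <= 2^-1 by rewrite ge_min lexx.
have e1g : l * e1 <= ga / 4.
  have e1' : e1 <= ga / (4 * l) by rewrite ge_min lexx orbT.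
  have -> : ga / 4 = l * (ga / (4 * l)) by field; rewrite gt_eqF.
  by rewrite ler_wpM2l // ltW.
set eta := ga / (8 * l).
have eta0 : 0 < eta by rewrite divr_gt0 // mulr_gt0.
set ed := ga / 8.
have ed0 : 0 < ed by rewrite divr_gt0.
set mu := l * eta + ed.
have mue : mu = ga / 4 by rewrite /mu /eta /ed; field; rewrite gt_eqF.
have [w Hw] := dd h.
have [del [del0 Hd]] := Hw ed ed0.
set rho := Num.min (Num.min (rC / 2) (rL / 2)) del.
have rho0 : 0 < rho by rewrite !lt_min !divr_gt0.
have [N2 HN2] := qo e1 e10.
have [N3 HN3] := xcv rho rho0.
have [k [hk [Pk hc]]] := hh (eta / (n%:R + 1)) (divr_gt0 eta0 np) (N1 + N2 + N3)%N.
have k1 : (N1 <= k)%N by apply: leq_trans hk; rewrite -addnA leq_addr.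
have k2 : (N2 <= k)%N by apply: leq_trans hk; rewrite addnAC leq_addl.
have k3 : (N3 <= k)%N by apply: leq_trans hk; rewrite leq_addl.
apply: Pk.
have h1 := HN1 k k1.
have h2 := HN2 k k2.
have h3 := HN3 k k3.
have uh := normv_coordB eta0 hc.
rewrite /u in uh.
have ane' := ane k.
set e := x k - xb in h2 h3 uh ane'.
set q := x k + d k - xb in h2.
have eqd : q - d k = e by rewrite /q /e addrAC addrK.
set a := normv e in h2 h3 uh ane'.
set Q := normv q in h2.
set D := normv (d k).
have a0 : 0 < a by rewrite lt_neqAle eq_sym ane' normv_ge0.
have Q0 : 0 <= Q := normv_ge0 _.
have D0 : 0 <= D := normv_ge0 _.
have aQD : a <= Q + D by rewrite /a -eqd /Q /D normvB.
have Qa : Q <= e1 * a := h2.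
have Qa2 : Q <= a / 2.
  by apply: le_trans Qa _; rewrite [a / 2]mulrC ler_wpM2r // ltW.
have arC : a < rC / 2 by apply: lt_le_trans h3 _; rewrite !ge_min lexx.
have arL : a < rL / 2 by apply: lt_le_trans h3 _; rewrite !ge_min lexx orbT.
have adel : a < del by apply: lt_le_trans h3 _; rewrite !ge_min lexx orbT.
have DB t : 0 < t <= 1 -> normv (G (xb + t *: e) - (t * a) *: w) <= t * a * mu.
  move=> ht; apply: (dir_bound G0 (ltW l0) HL Hd) => //; first [lra | rewrite -/a; lra].
have xe : xb + e = x k by rewrite /e addrC subrK.
have xq : xb + q = x k + d k by rewrite /q addrC subrK.
have dqe : d k = q - e by rewrite -eqd opprB addrC subrK.
have mu0 : 0 <= mu by rewrite mue divr_ge0 // ltW.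
have DB1 : normv (G (x k) - a *: w) <= a * mu.
  by have := DB 1; rewrite ltr01 lexx scale1r mul1r xe => /(_ isT).
have DC t : 0 <= t <= 1 -> normv (G (xb + t *: e) - t *: G (x k)) <= 2 * t * a * mu.
  move=> /andP[t0 t1].
  have [->|tn0] := eqVneq t 0.
    by rewrite scale0r addr0 G0 scale0r subrr normv0 mulr0 !mul0r.
  have tp : 0 < t by rewrite lt_neqAle eq_sym tn0.
  have eq : (G (xb + t *: e) - (t * a) *: w) - t *: (G (x k) - a *: w) =
     G (xb + t *: e) - t *: G (x k).
    by rewrite [t *: (G (x k) - _)]scalerBr scalerA opprB addrA subrK.
  rewrite -eq; apply: le_trans (normvB _ _) _.
  rewrite normvZ (ger0_norm (ltW tp)).
  have := DB t; rewrite tp t1 => /(_ isT) h4.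
  have : t * normv (G (x k) - a *: w) <= t * (a * mu) by rewrite ler_wpM2l // ltW.
  lra.
have DD t : 0 <= t <= 1 ->
    (dotv (G (x k)) e - 2 * mu * a ^+ 2) * t + 0 <= dotv (G (xb + t *: e)) e.
  move=> ht.
  have -> : dotv (G (xb + t *: e)) e =
     dotv (t *: G (x k)) e + dotv (G (xb + t *: e) - t *: G (x k)) e.
    by rewrite -dotvDl [t *: G (x k) + _]addrC subrK.
  rewrite dotvZl.
  have hc2 := cs (G (xb + t *: e) - t *: G (x k)) e.
  move: hc2; rewrite ler_norml => /andP[hc2 _].
  have : normv (G (xb + t *: e) - t *: G (x k)) * normv e <= 2 * t * a * mu * a.
    by apply: ler_wpM2r; [exact: normv_ge0 | exact: DC].
  rewrite -/a in hc2 *; lra.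
have hgE t : 0 <= t <= 1 -> has_gradient phi (xb + t *: e) (G (xb + t *: e)).
  move=> /andP[t0 t1]; apply: HC; rewrite addsubK normvZ ger0_norm // -/a.
  have : t * a <= a by rewrite ler_piMl // ltW.
  lra.
have L1 := phi_line_ge hgE DD.
rewrite xe in L1.
have hGq t : 0 <= t <= 1 -> normv (G (xb + t *: q)) <= l * Q.
  move=> /andP[t0 t1].
  have : t * Q <= Q by rewrite ler_piMl.
  move=> tq.
  apply: le_trans (lip0 G0 rL0 HL _) _.
    rewrite addsubK normvZ ger0_norm // -/Q; lra.
  by rewrite addsubK normvZ ger0_norm // -/Q ler_wpM2l // ltW.
have UU t : 0 <= t <= 1 -> dotv (G (xb + t *: q)) q <= 0 * t + l * Q ^+ 2.
  move=> ht; have hc2 := cs' (G (xb + t *: q)) q.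
  have : normv (G (xb + t *: q)) * Q <= l * Q * Q by rewrite ler_wpM2r // hGq.
  rewrite -/Q in hc2; rewrite expr2; lra.
have hgQ t : 0 <= t <= 1 -> has_gradient phi (xb + t *: q) (G (xb + t *: q)).
  move=> /andP[t0 t1]; apply: HC; rewrite addsubK normvZ ger0_norm // -/Q.
  have : t * Q <= Q by rewrite ler_piMl.
  lra.
have U1 := phi_line_le hgQ UU.
rewrite xq in U1.
have hGx : normv (G (x k)) <= l * a.
  apply: (lip0 G0 rL0 HL); rewrite -/e -/a; lra.
have gqb : - (l * a * Q) <= dotv (G (x k)) q.
  have hc2 := cs (G (x k)) q.
  have : normv (G (x k)) * Q <= l * a * Q by rewrite ler_wpM2r.
  move: hc2; rewrite -/Q ler_norml => /andP[hc2 _]; lra.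
have gs : dotv (G (x k)) (d k) = dotv (G (x k)) q - dotv (G (x k)) e.
  by rewrite dqe dotvBr.
have I1 : Q ^+ 2 <= e1 * a ^+ 2 / 2.
  have : Q * Q <= (e1 * a) * (e1 * a) by apply: ler_pM.
  have : e1 * e1 <= e1 / 2 by rewrite ler_pM2l // ?mulr1 //; lra.
  move=> h5 h6; rewrite !expr2.
  have : e1 * e1 * (a * a) <= e1 / 2 * (a * a) by rewrite ler_wpM2r // mulr_ge0 // ltW.
  lra.
have J1 : l * Q ^+ 2 <= ga / 4 * a ^+ 2 / 2.
  apply: le_trans (_ : l * (e1 * a ^+ 2 / 2) <= _); first by rewrite ler_wpM2l // ltW.
  have : l * e1 * a ^+ 2 <= ga / 4 * a ^+ 2 by rewrite ler_wpM2r // sqr_ge0.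
  lra.
have J2 : l * a * Q <= ga / 4 * a ^+ 2.
  have : l * a * Q <= l * a * (e1 * a) by rewrite ler_wpM2l // mulr_ge0 // ltW.
  have : l * e1 * a ^+ 2 <= ga / 4 * a ^+ 2 by rewrite ler_wpM2r // sqr_ge0.
  rewrite expr2; lra.
have I3 : (2^-1 - sigma) * dotv (G (x k)) (d k) <= - (ga * a ^+ 2).
  have Da : a / 2 <= D by lra.
  have D2 : a ^+ 2 / 4 <= D ^+ 2.
    have : (a / 2) * (a / 2) <= D * D by apply: ler_pM => //; lra.
    rewrite !expr2; lra.
  have sp : 0 <= 2^-1 - sigma by lra.
  have kp : 0 <= kappa^-1 by rewrite invr_ge0 ltW.
  have h6 : kappa^-1 * (a ^+ 2 / 4) <= kappa^-1 * D ^+ 2 by rewrite ler_wpM2l.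
  rewrite -/D in h1.
  have h7 : (2^-1 - sigma) * dotv (G (x k)) (d k) <=
     (2^-1 - sigma) * (- kappa^-1 * D ^+ 2) by rewrite ler_wpM2l.
  have h8 : (2^-1 - sigma) * (kappa^-1 * (a ^+ 2 / 4)) <=
     (2^-1 - sigma) * (kappa^-1 * D ^+ 2) by rewrite ler_wpM2l.
  have gae : ga * a ^+ 2 = (2^-1 - sigma) * (kappa^-1 * (a ^+ 2 / 4)).
    by rewrite /ga; field; rewrite gt_eqF.
  lra.
rewrite mue in L1.
apply: (final_arith U1 L1 gqb gs J1 J2 I3).
by rewrite mulr_ge0 ?sqr_ge0 // ltW.
Qed.
Theorem proposition4p4 (R : realType) (n : nat) (phi : 'rV[R]_n -> R)
  (G : 'rV[R]_n -> 'rV[R]_n) (xb : 'rV[R]_n) (l : R)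
  (x d : nat -> 'rV[R]_n) (sigma : R) :
  C1_around phi G xb ->
  G xb = 0 ->
  0 < l ->
  loc_lipschitz G xb l ->
  semismooth_star G xb (G xb) ->
  vseq_cvg x xb ->
  (forall k, x k != xb) ->
  (forall eps : R, 0 < eps -> eventually_nat (fun k =>
     normv (x k + d k - xb) <= eps * normv (x k - xb))) ->
  ((dir_differentiable G xb /\
     (exists kappa : R, 0 < kappa /\ eventually_nat (fun k =>
        dotv (G (x k)) (d k) <= - kappa^-1 * normv (d k) ^+ 2)) /\
     0 < sigma /\ sigma < 2^-1)
   \/
   (exists kappa : R, 0 < kappa /\
     eventually_nat (fun k =>
        phi (x k + d k) - phi (x k)
          <= dotv (G (x k + d k)) (d k) - (2 * kappa)^-1 * normv (d k) ^+ 2) /\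
     0 < sigma /\ sigma < (2 * l * kappa)^-1)) ->
  eventually_nat (fun k =>
    phi (x k + d k) <= phi (x k) + sigma * dotv (G (x k)) (d k)).

Proof.
move=> [rC [rC0 HC]] G0 l0 [rL [rL0 HL]] _ xcv xne qo
  [[dd [[kappa [k0 hk]] [s0 s2]]] | [kappa [k0 [hk [s0 sl]]]]].
- apply: (case_i G0 l0 rC0 _ rL0 HL xcv xne qo dd k0 hk s0 s2).
  by move=> y hy; exact: (HC y hy).1.
- exact: (case_ii G0 l0 rL0 HL xcv qo k0 hk s0 sl).
Qed.
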